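(* Let $\tau:\mathcal A\to\mathcal A^+$ be a substitution satisfying the standing assumptions below, with one-sided subshift $(X_\tau,\sigma)$. Then: (i) every $y\in\tau(X_\tau)$ can be written in exactly one way as $y=\tau(x)$ with $x\in X_\tau$; (ii) every $y\in X_\tau\setminus\tau(X_\tau)$ can be written as $y=\sigma^k(\tau(x))$ with $x=x_0x_1\ldots\in X_\tau$ and $0<k<|\tau(x_0)|$, and in any such representation $\sigma(x)$ is uniquely determined by $y$ (i.e. if $y=\sigma^k(\tau(x))=\sigma^{k'}(\tau(x'))$ with $0<k<|\tau(x_0)|$ and $0<k'<|\tau(x'_0)|$, then $\sigma(x)=\sigma(x')$).
   Context: $\mathcal A$ is a finite alphabet, $\mathcal A^+$ the set of finite words over $\mathcal A$; for a word $w$, $|w|$ is its length and $w_{[i,j]}=w_i\cdots w_j$. A substitution $\tau:\mathcal A\to\mathcal A^+$ is extended to words and to one-sided sequences $x=x_0x_1\ldots\in\mathcal A^{\mathbb N}$ by concatenation, $\tau(x)=\tau(x_0)\tau(x_1)\cdots$. $\sigma$ is the left shift on $\mathcal A^{\mathbb N}$ (product of discrete topologies). A fixed point is $u\in\mathcal A^{\mathbb N}$ with $\tau(u)=u$, and $X_\tau$ is the closure of $\{\sigma^n(u):n\ge0\}$. Standing assumptions: $\tau$ is primitive (some $k$ such that every letter occurs in $\tau^k(a)$ for every $a$), $X_\tau$ is aperiodic (infinite), $\tau$ has a fixed point $u$, $\tau$ is (unilaterally) recognizable, and every power $\tau^n$ ($n\ge1$) is injective on letters. Recognizable means: with $E=\{0\}\cup\{|\tau(u_{[0,p-1]})|:p>0\}$,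 there is $L$ such that whenever $u_{[i,i+L-1]}=u_{[j,j+L-1]}$ and $i\in E$, then $j\in E$. *)

(* Defs.v *)
From Stdlib Require List.
From mathcomp Require Import all_boot.
Set Implicit Arguments. Unset Strict Implicit. Unset Printing Implicit Defensive.

Section Subst.
Variable A : finType.

Definition aseq := nat -> A.

Definition shift (x : aseq) : aseq := fun n => x n.+1.

Definition subst_word (tau : A -> seq A) (w : seq A) : seq A :=
  flatten (map tau w).

Definition subst_pow (tau : A -> seq A) (n : nat) (a : A) : seq A :=
  iter n (subst_word tau) [:: a].

(* tau extended to one-sided sequences by concatenation:
   tau(x) = tau(x_0) tau(x_1) ...; since every tau(a) is non-empty, the
   n-th letter of tau(x) is the n-th letter of tau(x_0 ... x_n).
   (the default x 0 of nth is never used when tau is non-erasing) *)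
Definition subst_seq (tau : A -> seq A) (x : aseq) : aseq :=
  fun n => nth (x 0) (subst_word tau [seq x i | i <- iota 0 n.+1]) n.

Definition factor (x : aseq) (i L : nat) : seq A := [seq x (i + t) | t <- iota 0 L].

(* X_tau : closure of the shift-orbit of u in the product topology *)
Definition in_orbit_closure (u : aseq) (y : aseq) : Prop :=
  forall N, exists n, forall i, i < N -> y i = u (n + i).

Definition non_erasing (tau : A -> seq A) : Prop := forall a, 0 < size (tau a).

Definition primitive (tau : A -> seq A) : Prop :=
  exists k, forall a b : A, b \in subst_pow tau k a.

Definition fixed_point (tau : A -> seq A) (u : aseq) : Prop := subst_seq tau u = u.

Definition infinite_subshift (u : aseq) : Prop :=
  ~ exists s : seq aseq, forall y, in_orbit_closure u y -> List.In y s.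

Definition cut_points (tau : A -> seq A) (u : aseq) (i : nat) : Prop :=
  i = 0 \/ exists p, 0 < p /\ i = size (subst_word tau (factor u 0 p)).

Definition recognizable (tau : A -> seq A) (u : aseq) : Prop :=
  exists L, forall i j, factor u i L = factor u j L ->
    cut_points tau u i -> cut_points tau u j.

Definition powers_injective_on_letters (tau : A -> seq A) : Prop :=
  forall n, 0 < n -> injective (subst_pow tau n).

End Subst.

(* Main.v *)
Require Import Defs.
From mathcomp Require Import all_boot.
From mathcomp Require Import zify.
From Stdlib Require Import Classical ClassicalEpsilon FunctionalExtensionality.
Set Implicit Arguments. Unset Strict Implicit. Unset Printing Implicit Defensive.

Section Aux.
Variable A : finType.
Variable tau : A -> seq A.
Hypothesis ne : non_erasing tau.

Definition Ssz (x : aseq A) p := size (subst_word tau (mkseq x p)).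

Lemma iter_shift k (x : aseq A) i : iter k (@shift A) x i = x (k + i).
Proof. elim: k x i => [|k IH] x i //=. by rewrite /shift IH addSnnS. Qed.

Lemma sw_cat s1 s2 : subst_word tau (s1 ++ s2) = subst_word tau s1 ++ subst_word tau s2.
Proof. by rewrite /subst_word map_cat flatten_cat. Qed.

Lemma mkseq_add (x : aseq A) p q :
  mkseq x (p + q) = mkseq x p ++ mkseq (fun t => x (p + t)) q.
Proof.
rewrite /mkseq iotaD map_cat add0n.
have -> : iota p q = iota (p + 0) q by rewrite addn0.
by rewrite iotaDl -map_comp.
Qed.

Lemma size_sw w : size w <= size (subst_word tau w).
Proof.
elim: w => [|a w IH] //=. rewrite /subst_word /= size_cat -/(subst_word tau w).
have := ne a. lia.
Qed.

Lemma S_add x p q : Ssz x (p + q) = Ssz x p + Ssz (fun t => x (p + t)) q.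
Proof. by rewrite /Ssz mkseq_add sw_cat size_cat. Qed.

Lemma S1 x : Ssz x 1 = size (tau (x 0)).
Proof. by rewrite /Ssz /mkseq /= /subst_word /= cats0. Qed.

Lemma S0 x : Ssz x 0 = 0.
Proof. by []. Qed.

Lemma S_step x p : Ssz x p.+1 = Ssz x p + size (tau (x p)).
Proof. by rewrite -addn1 S_add S1 addn0. Qed.

Lemma S_ge x M : M <= Ssz x M.
Proof. by have := size_sw (mkseq x M); rewrite size_mkseq. Qed.

Lemma S_lt x p q : p < q -> Ssz x p < Ssz x q.
Proof.
move=> pq; rewrite -(subnKC (ltnW pq)) S_add.
have := S_ge (fun t => x (p + t)) (q - p).
set s := Ssz (fun t => x (p + t)) (q - p). lia.
Qed.

Lemma S_le x p q : p <= q -> Ssz x p <= Ssz x q.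
Proof.
rewrite leq_eqVlt => /orP[/eqP->//|h]. exact: ltnW (S_lt x h).
Qed.

Lemma mkseq_ext (x z : aseq A) m : (forall t, t < m -> x t = z t) -> mkseq x m = mkseq z m.
Proof.
move=> h; rewrite /mkseq; apply/eq_in_map => t; rewrite mem_iota add0n => /andP[_ ht]; exact: h.
Qed.

Lemma S_ext x z m : (forall t, t < m -> x t = z t) -> Ssz x m = Ssz z m.
Proof. by move=> h; rewrite /Ssz (mkseq_ext h). Qed.

Lemma nth_sw x M n d : n < Ssz x M ->
  subst_seq tau x n = nth d (subst_word tau (mkseq x M)) n.
Proof.
move=> hn; rewrite /subst_seq -/(mkseq x n.+1).
case: (leqP n.+1 M) => hM.
  rewrite -(subnKC hM) mkseq_add sw_cat nth_cat.
  have := S_ge x n.+1; rewrite /Ssz => h; rewrite h.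
  by apply: set_nth_default.
have -> : mkseq x n.+1 = mkseq x M ++ mkseq (fun t => x (M + t)) (n.+1 - M).
  by rewrite -mkseq_add subnKC // ltnW.
rewrite sw_cat nth_cat; move: hn; rewrite /Ssz => hn; rewrite hn.
by apply: set_nth_default.
Qed.

Lemma tau_ext x z M n : (forall t, t < M -> x t = z t) -> n < Ssz x M ->
  subst_seq tau x n = subst_seq tau z n.
Proof.
move=> h hn; rewrite (nth_sw (x 0) hn) (@nth_sw z M n (x 0)) ?(mkseq_ext h) //.
by rewrite -(S_ext h).
Qed.

Lemma shift_sub x p j :
  subst_seq tau x (Ssz x p + j) = subst_seq tau (fun t => x (p + t)) j.
Proof.
have h1 : Ssz x p + j < Ssz x (p + j.+1).
  rewrite S_add; have := S_ge (fun t => x (p + t)) j.+1.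
  set s := Ssz (fun t => x (p + t)) j.+1. lia.
rewrite (nth_sw (x 0) h1) mkseq_add sw_cat nth_cat.
rewrite -/(Ssz x p) ltnNge leq_addr /= addKn.
have h2 : j < Ssz (fun t => x (p + t)) j.+1 by exact: S_ge.
by rewrite (nth_sw (x 0) h2).
Qed.

Lemma block x m j d : j < size (tau (x m)) ->
  subst_seq tau x (Ssz x m + j) = nth d (tau (x m)) j.
Proof.
move=> hj; rewrite shift_sub.
have h : j < Ssz (fun t => x (m + t)) 1 by rewrite S1 addn0.
by rewrite (nth_sw d h) /mkseq /= /subst_word /= cats0 addn0.
Qed.

Lemma decomp x n : exists p, Ssz x p <= n < Ssz x p.+1.
Proof.
elim: n => [|n [p /andP[h1 h2]]].
  by exists 0; rewrite S0 /=; have := S_ge x 1.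
case: (ltnP n.+1 (Ssz x p.+1)) => h3.
  by exists p; rewrite h3 andbT; apply: leqW.
exists p.+1; have := S_lt x (ltnSn p.+1). lia.
Qed.

End Aux.


Section Main.
Variable A : finType.
Variable tau : A -> seq A.
Hypothesis ne : non_erasing tau.
Variable u : aseq A.
Hypothesis Hfix : fixed_point tau u.

Local Notation S := (Ssz tau).

Lemma cut_iff i : cut_points tau u i <-> exists p, i = S u p.
Proof.
split.
  case=> [->|[p [_ ->]]]; first by exists 0.
  by exists p.
case=> [[|p] ->]; first by left.
by right; exists p.+1.
Qed.

Lemma u_shift p q : u (S u p + q) = subst_seq tau (fun t => u (p + t)) q.
Proof.
have := congr1 (fun f => f (S u p + q)) Hfix => /= <-.
exact: shift_sub.
Qed.

Variable L : nat.
Hypothesis HL : forall i j, factor u i L = factor u j L ->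
    cut_points tau u i -> cut_points tau u j.

Lemma toX x M p : (forall i, i < M -> x i = u (p + i)) ->
  forall q, q < M -> subst_seq tau x q = u (S u p + q).
Proof.
move=> h q qM; rewrite u_shift; apply: (tau_ext ne (M := M)) => //.
exact: leq_trans qM (S_ge ne _ _).
Qed.

Lemma cut_transfer x x' k k' i :
  in_orbit_closure u x -> in_orbit_closure u x' ->
  iter k (@shift A) (subst_seq tau x) = iter k' (@shift A) (subst_seq tau x') ->
  (exists m, S x m = k + i) -> exists m', S x' m' = k' + i.
Proof.
move=> Hx Hx' E [m Hm].
pose M := k + k' + i + L + 1.
case: (Hx M) => p Hp; case: (Hx' M) => p' Hp'.
have Ey : forall j, subst_seq tau x (k + j) = subst_seq tau x' (k' + j).
  by move=> j; have := congr1 (fun f => f j) E; rewrite /= !iter_shift.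
have Tx := toX Hp; have Tx' := toX Hp'.
have Hfac : factor u (S u p + (k + i)) L = factor u (S u p' + (k' + i)) L.
  rewrite /factor; apply/eq_in_map => t; rewrite mem_iota add0n => /andP[_ ht].
  rewrite -!addnA -Tx; last by rewrite /M; lia.
  rewrite Ey -Tx'; last by rewrite /M; lia.
  done.
have mM : m < M.
  rewrite ltnNge; apply/negP => hm.
  have := S_le ne x hm; have := S_ge ne x M; rewrite /M; lia.
have : cut_points tau u (S u p + (k + i)).
  apply/cut_iff; exists (p + m); rewrite S_add -Hm; congr (_ + _).
  by apply: S_ext => t tm; rewrite Hp //; exact: ltn_trans tm mM.
move/(HL Hfac)/cut_iff => [q Hq].
have pq : p' <= q.
  rewrite leqNgt; apply/negP => h; have := S_lt ne u h; lia.
move: Hq; rewrite -(subnKC pq) S_add => /addnI Hq.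
have qM : q - p' <= M.
  rewrite leqNgt; apply/negP => h; have := S_lt ne (fun t => u (p' + t)) h.
  have := S_ge ne (fun t => u (p' + t)) M.
  set s1 := S (fun t => u (p' + t)) M. set s2 := S (fun t => u (p' + t)) (q - p').
  rewrite /M; lia.
exists (q - p'); rewrite Hq; apply: S_ext => t tq; apply: Hp'.
exact: leq_trans tq qM.
Qed.

End Main.

Lemma inc_range_eq (f g : nat -> nat) :
  (forall m, f m < f m.+1) -> (forall m, g m < g m.+1) ->
  (forall m, exists m', g m' = f m) -> (forall m, exists m', f m' = g m) ->
  forall m, f m = g m.
Proof.
move=> hf hg rf rg.
have sm : forall h : nat -> nat, (forall m, h m < h m.+1) ->
    forall a b, a < b -> h a < h b.
  move=> h hh a b; elim: b => // b IHb; rewrite ltnS leq_eqVlt => /orP[/eqP->|/IHb h1].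
    exact: hh.
  exact: ltn_trans h1 (hh b).
have inj : forall h : nat -> nat, (forall m, h m < h m.+1) ->
    forall a b, h a = h b -> a = b.
  move=> h hh a b e; case: (ltngtP a b) => // ab.
    by have := sm h hh _ _ ab; rewrite e ltnn.
  by have := sm h hh _ _ ab; rewrite e ltnn.
elim/ltn_ind => m IH.
case: (rf m) => j hj.
case: (ltngtP j m) => jm.
- have := IH j jm; rewrite hj => /(inj f hf) e; by rewrite e ltnn in jm.
- case: (rg m) => l hl.
  case: (ltngtP l m) => lm.
  + have := IH l lm; rewrite hl => /(inj g hg) e; by rewrite e ltnn in lm.
  + have := sm f hf _ _ lm; have := sm g hg _ _ jm. lia.
  + by rewrite -hl lm.
- by rewrite -hj jm.
Qed.


Section Core.
Variable A : finType.
Variable tau : A -> seq A.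
Hypothesis ne : non_erasing tau.
Hypothesis inj : injective tau.
Variable u : aseq A.
Hypothesis Hfix : fixed_point tau u.
Variable L : nat.
Hypothesis HL : forall i j, factor u i L = factor u j L ->
    cut_points tau u i -> cut_points tau u j.

Local Notation S := (Ssz tau).

Lemma core x x' k k' y :
  in_orbit_closure u x -> in_orbit_closure u x' ->
  k <= S x 1 -> k' <= S x' 1 -> (k == 0) = (k' == 0) ->
  y = iter k (@shift A) (subst_seq tau x) ->
  y = iter k' (@shift A) (subst_seq tau x') ->
  (forall m, S x m.+1 - k = S x' m.+1 - k') /\ shift x = shift x'.
Proof.
move=> Hx Hx' hk hk' hkk Ey Ey'.
have E : iter k (@shift A) (subst_seq tau x) = iter k' (@shift A) (subst_seq tau x')
  by rewrite -Ey -Ey'.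
have E' := esym E.
have Sk : forall m, k <= S x m.+1 by move=> m; apply: leq_trans hk (S_le ne x _).
have Sk' : forall m, k' <= S x' m.+1 by move=> m; apply: leq_trans hk' (S_le ne x' _).
have incf : forall m, S x m.+1 - k < S x m.+2 - k.
  by move=> m; have := S_lt ne x (ltnSn m.+1); have := Sk m; lia.
have incg : forall m, S x' m.+1 - k' < S x' m.+2 - k'.
  by move=> m; have := S_lt ne x' (ltnSn m.+1); have := Sk' m; lia.
have range : forall (x x' : aseq A) k k', in_orbit_closure u x -> in_orbit_closure u x' ->
    (forall m, k <= S x m.+1) -> (k == 0) = (k' == 0) ->
    iter k (@shift A) (subst_seq tau x) = iter k' (@shift A) (subst_seq tau x') ->
    forall m, exists m', S x' m'.+1 - k' = S x m.+1 - k.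
  move=> z z' l l' Hz Hz' Sl hl El m.
  have [m' hm'] := cut_transfer ne Hfix HL (i := S z m.+1 - l) Hz Hz' El
       (ex_intro _ m.+1 (esym (subnKC (Sl m)))).
  case: m' hm' => [|m'] hm'.
    rewrite S0 in hm'. have := S_ge ne z m.+1.
    have l'0 : l' = 0 by lia.
    move: hl; rewrite l'0 eqxx => /eqP l0. have := Sl m. lia.
  by exists m'; rewrite hm' addKn.
have fg := inc_range_eq incf incg (range _ _ _ _ Hx Hx' Sk hkk E)
   (range _ _ _ _ Hx' Hx Sk' (esym hkk) E').
split=> //.
apply: functional_extensionality => m; rewrite /shift.
apply: inj.
have fm := fg m; have fm1 := fg m.+1.
have s1 := S_step tau x m.+1; have s2 := S_step tau x' m.+1.
have := Sk m; have := Sk' m; have := Sk m.+1; have := Sk' m.+1 => a1 a2 a3 a4.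
have sz : size (tau (x m.+1)) = size (tau (x' m.+1)) by lia.
apply: (eq_from_nth (x0 := x 0) sz) => j hj.
rewrite -(block ne (x:=x) (x 0)) // -(block ne (x:=x') (x 0)) -?sz //.
have Ej : forall j, subst_seq tau x (k + j) = subst_seq tau x' (k' + j).
  by move=> i; have := congr1 (fun f => f i) E; rewrite /= !iter_shift.
have -> : S x m.+1 + j = k + (S x m.+1 - k + j) by lia.
by rewrite Ej fm; congr subst_seq; lia.
Qed.

End Core.

Section Cluster.
Variable T : finType.
Variable z : nat -> nat -> T.

Definition G (w : seq T) := forall N0, exists N, N0 <= N /\ mkseq (z N) (size w) = w.

Lemma G0 : G [::].
Proof. by move=> N0; exists N0. Qed.

Lemma G_step w : G w -> exists a, G (rcons w a).
Proof.
move=> Gw; apply: NNPP => H.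
have H' : forall a, exists N0, forall N, N0 <= N ->
    mkseq (z N) (size w).+1 <> rcons w a.
  move=> a; apply: NNPP => Ha; apply: H; exists a => N0.
  apply: NNPP => HN; apply: Ha; exists N0 => N leN E; apply: HN.
  by exists N; rewrite size_rcons.
pose bnd a := proj1_sig (constructive_indefinite_description _ (H' a)).
have Hb a : forall N, bnd a <= N -> mkseq (z N) (size w).+1 <> rcons w a
  := proj2_sig (constructive_indefinite_description _ (H' a)).
case: (Gw (\max_(a : T) bnd a)) => N [leN EN].
apply: (Hb (z N (size w)) N).
  exact: leq_trans (leq_bigmax _) leN.
by rewrite mkseqS EN.
Qed.

Definition Gs := {w | G w}.
Definition ext (w : Gs) : Gs :=
  exist _ (rcons (sval w) (sval (constructive_indefinite_description _ (G_step (proj2_sig w)))))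
    (proj2_sig (constructive_indefinite_description _ (G_step (proj2_sig w)))).
Fixpoint W n : Gs := match n with 0 => exist _ [::] G0 | n.+1 => ext (W n) end.
Definition xc i := nth (z 0 0) (sval (W i.+1)) i.

Lemma sizeW n : size (sval (W n)) = n.
Proof. by elim: n => //= n IH; rewrite size_rcons IH. Qed.

Lemma W_mk n : sval (W n) = mkseq xc n.
Proof.
elim: n => // n IH.
rewrite mkseqS -IH /xc /=.
by rewrite nth_rcons sizeW ltnn eqxx.
Qed.

Lemma cluster : exists x, forall M N0, exists N, N0 <= N /\ forall i, i < M -> z N i = x i.
Proof.
exists xc => M N0.
have := proj2_sig (W M) N0; rewrite sizeW W_mk; case=> N [le E].
exists N; split=> // i iM.
by have := congr1 (fun s => nth (z 0 0) s i) E; rewrite !nth_mkseq.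
Qed.

End Cluster.


Section Exist.
Variable A : finType.
Variable tau : A -> seq A.
Hypothesis ne : non_erasing tau.
Variable u : aseq A.
Hypothesis Hfix : fixed_point tau u.
Local Notation S := (Ssz tau).

Lemma exists_rep y : in_orbit_closure u y ->
  exists x k, [/\ in_orbit_closure u x, k < size (tau (x 0))
              & y = iter k (@shift A) (subst_seq tau x)].
Proof.
move=> Hy.
have H1 : forall N, exists pk : nat * nat,
    (forall i, i < N -> y i = u (S u pk.1 + pk.2 + i)) /\ pk.2 < size (tau (u pk.1)).
  move=> N; case: (Hy N) => n Hn; case: (decomp ne u n) => p /andP[h1 h2].
  exists (p, n - S u p); split => /=.
    by move=> i iN; rewrite subnKC //; exact: Hn.
  by move: h2; rewrite S_step; lia.
pose pk N := sval (constructive_indefinite_description _ (H1 N)).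
have Hpk N : (forall i, i < N -> y i = u (S u (pk N).1 + (pk N).2 + i)) /\
     (pk N).2 < size (tau (u (pk N).1))
  := proj2_sig (constructive_indefinite_description _ (H1 N)).
pose B := \max_(a : A) size (tau a).
pose z N i := ((inord (pk N).2 : 'I_B.+1), u ((pk N).1 + i)).
case: (cluster z) => x' Hx'.
have key : forall M N0, exists N, [/\ N0 <= N, val (x' 0).1 = (pk N).2
    & forall i, i < M -> (x' i).2 = u ((pk N).1 + i)].
  move=> M N0; case: (Hx' M.+1 N0) => N [le h]; exists N; split => //.
    rewrite -(h 0 erefl) /z /= inordK //.
    apply: leq_trans (proj2 (Hpk N)) _.
    apply: leqW; rewrite /B; exact: (leq_bigmax (F := fun a => size (tau a))).
  by move=> i iM; rewrite -h //; apply: leqW.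
exists (fun i => (x' i).2), (val (x' 0).1); split.
- move=> M; case: (key M 0) => N [_ _ h]; exists (pk N).1; exact: h.
- case: (key 1 0) => N [_ -> h]; rewrite h // addn0; exact: (proj2 (Hpk N)).
- apply: functional_extensionality => i; rewrite iter_shift.
  set k := val (x' 0).1.
  case: (key (k + i).+1 i.+1) => N [leN hk h].
  rewrite (proj1 (Hpk N)) //.
  rewrite -addnA u_shift // -hk.
  symmetry; apply: (tau_ext ne (M := (k + i).+1)) => //.
  exact: S_ge.
Qed.
End Exist.

Theorem corollary3 (A : finType) (tau : A -> seq A) (u : aseq A) :
  non_erasing tau ->
  primitive tau ->
  infinite_subshift u ->
  fixed_point tau u ->
  recognizable tau u ->
  powers_injective_on_letters tau ->
  (* (i) *)
  (forall y : aseq A,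
     (exists x, in_orbit_closure u x /\ y = subst_seq tau x) ->
     exists! x, in_orbit_closure u x /\ y = subst_seq tau x) /\
  (* (ii) *)
  (forall y : aseq A,
     in_orbit_closure u y ->
     ~ (exists x, in_orbit_closure u x /\ y = subst_seq tau x) ->
     (exists (x : aseq A) (k : nat),
        [/\ in_orbit_closure u x, 0 < k, k < size (tau (x 0))
          & y = iter k (@shift A) (subst_seq tau x)]) /\
     (forall (x x' : aseq A) (k k' : nat),
        in_orbit_closure u x -> 0 < k -> k < size (tau (x 0)) ->
        y = iter k (@shift A) (subst_seq tau x) ->
        in_orbit_closure u x' -> 0 < k' -> k' < size (tau (x' 0)) ->
        y = iter k' (@shift A) (subst_seq tau x') ->
        shift x = shift x')).
Proof.
move=> ne _ _ Hfix [L HL] Hinj.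
have inj : injective tau.
  move=> a b h; apply: (Hinj 1 erefl).
  by rewrite /subst_pow /= /subst_word /= !cats0 h.
split.
  move=> y [x [Hx Ey]]; exists x; split => // x' [Hx' Ey'].
  have [fg sh] := core ne inj Hfix HL Hx Hx' (leq0n _) (leq0n _) erefl Ey Ey'.
  apply: functional_extensionality => -[|i]; last first.
    exact: (congr1 (fun f => f i) sh).
  apply: inj.
  have f0 := fg 0; rewrite !subn0 !S1 in f0.
  apply: (eq_from_nth (x0 := x 0) f0) => j hj.
  rewrite -(block ne (x:=x) (x 0)) // -(block ne (x:=x') (x 0)) -?f0 //.
  by rewrite !S0 /= -Ey -Ey'.
move=> y Hy Hn; split.
  have [x [k [Hx hk Ey]]] := exists_rep ne Hfix Hy.
  exists x, k; split => //.
  case: k hk Ey => // hk Ey; case: Hn; exists x; split => //.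
move=> x x' k k' Hx k0 hk Ey Hx' k0' hk' Ey'.
have hkk : (k == 0) = (k' == 0) by case: k k0 {hk Ey}; case: k' k0' {hk' Ey'}.
have b1 : k <= Ssz tau x 1 by rewrite S1 ltnW.
have b2 : k' <= Ssz tau x' 1 by rewrite S1 ltnW.
have [_ sh] := core ne inj Hfix HL Hx Hx' b1 b2 hkk Ey Ey'.
exact: sh.
Qed.
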